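(* For every $r\ge 3$ and all integers $3\le k_0\le k_1\le \cdots \le k_{r-1}$, \[ S(r;k_0,\dots,k_{r-1}) \ge \Bigl(\prod_{j=2}^{r-1}k_j\Bigr)S(2;k_0,k_1) -\sum_{i=2}^{r-1}\prod_{j=i+1}^{r-1}k_j \] (empty product equal to $1$). In particular, if $4\le s\le t\le k_2\le \cdots \le k_{r-1}$, then \[ S(r;s,t,k_2,\dots,k_{r-1}) \ge \Bigl(\prod_{j=2}^{r-1}k_j\Bigr)(st-t-1) -\sum_{i=2}^{r-1}\prod_{j=i+1}^{r-1}k_j. \]
   Context: For an integer $k\ge 3$, let $\mathcal{L}(k)$ denote the equation $x_1+x_2+\cdots+x_{k-1}=x_k$ in positive integer variables (the $x_i$ need not be distinct). For $N\ge1$, write $[1,N]=\{1,2,\dots,N\}$. For integers $r\ge1$ and $k_0,\dots,k_{r-1}\ge 3$, the generalized Schur number $S(r;k_0,\dots,k_{r-1})$ is the least positive integer $N$ such that for every coloring $\Delta:[1,N]\to\{0,1,\dots,r-1\}$ there exist some $i\in\{0,\dots,r-1\}$ and positive integers $x_1,\dots,x_{k_i}\in[1,N]$ satisfying $\mathcal{L}(k_i)$ with $\Delta(x_1)=\cdots=\Delta(x_{k_i})=i$. *)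

(* Defs.v *)
From mathcomp Require Import all_boot all_order all_algebra.
Set Implicit Arguments. Unset Strict Implicit. Unset Printing Implicit Defensive.

(* The colors are 0..r-1; the parameters k_0,...,k_{r-1} are given by a
   function k : nat -> nat (only the values k 0, ..., k (r-1) matter).
   A coloring of [1,N] with r colors is a function col : nat -> nat with
   col n < r for 1 <= n <= N (values outside [1,N] are irrelevant). *)

(* x_1, ..., x_m are encoded as x 0, ..., x (m-1); L(m) reads
   x 0 + ... + x (m-2) = x (m-1). *)
Definition mono_solution (N : nat) (col : nat -> nat) (i m : nat) : Prop :=
  exists x : nat -> nat,
    (forall j, j < m -> 1 <= x j <= N /\ col (x j) = i) /\
    \sum_(j < m.-1) x j = x m.-1.

Definition schur_prop (r : nat) (k : nat -> nat) (N : nat) : Prop :=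
  forall col : nat -> nat, (forall n, 1 <= n <= N -> col n < r) ->
    exists2 i, i < r & mono_solution N col i (k i).

Definition is_schur_number (r : nat) (k : nat -> nat) (N : nat) : Prop :=
  0 < N /\ schur_prop r k N /\ (forall M, 0 < M < N -> ~ schur_prop r k M).

(* Main.v *)
Require Import Defs.
From mathcomp Require Import all_boot all_order all_algebra zify.
Import GRing.Theory Num.Theory.
Lemma sum_affine n a d (b : nat -> nat) :
  \sum_(j < n) (a + d * b j) = n * a + d * \sum_(j < n) b j.
Proof. rewrite big_split /= -big_distrr /= sum_nat_const card_ord //. Qed.
Lemma sum_le (f g : nat -> nat) n : (forall j, j < n -> f j <= g j) ->
  \sum_(j < n) f j <= \sum_(j < n) g j.
Proof. move=> H; apply: leq_sum => j _; exact: H. Qed.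

Definition good (k : nat -> nat) m N col :=
  (forall n, 1 <= n <= N -> col n < m) /\
  (forall i, i < m -> ~ mono_solution N col i (k i)).

Lemma good_bound k m M col N : good k m M col -> is_schur_number m k N -> M < N.
Proof.
move=> [Hr Hm] [N0 [HS _]]; rewrite ltnNge; apply/negP => NM.
have [i im Hi] := HS col (fun n Hn => Hr n ltac:(lia)).
apply: (Hm i im); move: Hi => [x [Hx Hs]]; exists x; split => // j Hj.
have := Hx j Hj; lia.
Qed.

Lemma ext k m M col : good k m M col -> (forall i, i <= m -> 3 <= k i) ->
  (forall i, i < m -> k i <= k m) ->
  good k m.+1 (k m * M.+1 - 2)
   (fun n => if n <= M then col n else if n <= (k m - 1) * M.+1 - 1 then m
             else col (n - ((k m - 1) * M.+1 - 1))).
Proof.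
move=> [Hr Hm] H3 Hle.
set K := k m. set d := (K - 1) * M.+1 - 1.
have K3 : 3 <= K by apply: H3.
have ed : d + 1 = K * M.+1 - M.+1 by rewrite /d mulnBl mul1n; nia.
have dB : M.+1 <= d by nia.
split.
  move=> n Hn; case: ifP => h1; first by have := Hr n ltac:(lia); lia.
  case: ifP => h2 //; have := Hr (n - d) ltac:(nia); lia.
move=> i ilt [x [Hx Hs]].
have cl : forall j, j < k i -> (x j <= M /\ col (x j) = i) \/ (i = m /\ M < x j <= d)
          \/ (d < x j /\ 1 <= x j - d <= M /\ col (x j - d) = i).
  move=> j Hj; have [h1 h3] := Hx j Hj; move: h3.
  case: ifP => a1; first by move=> h; left; split.
  case: ifP => a2; first by move=> h; right; left; lia.
  by move=> h; right; right; split; [lia| split => //; nia].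
have ki3 : 3 <= k i by apply: H3; lia.
case: (ltngtP i m) => [im||]; last first.
- move=> eim; subst i; rewrite -/K in Hs Hx cl.
  have lb : forall j, j < K.-1 -> M.+1 <= x j.
    move=> j Hj; have [[a b]|[[_ b]|[a [b c]]]] := cl j ltac:(rewrite /K; lia).
    + have := Hr (x j) ltac:(have := Hx j ltac:(rewrite /K; lia); lia); lia.
    + lia.
    + have := Hr (x j - d) b; lia.
  have := sum_le (fun _ => M.+1) x _ (fun j Hj => lb j Hj).
  rewrite sum_nat_const card_ord -/K Hs.
  have [[a b]|[[_ b]|[a [b c]]]] := cl K.-1 ltac:(rewrite /K; lia).
  + have := Hr (x K.-1) ltac:(have := Hx K.-1 ltac:(rewrite /K; lia); lia); lia.
  + nia.
  + have := Hr (x K.-1 - d) b; lia.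
- lia.
set c := k i.
set y := fun j => if x j <= M then x j else x j - d.
set b := fun j => nat_of_bool (M < x j).
have cl2 : forall j, j < c -> [/\ x j = y j + d * b j, 1 <= y j <= M & col (y j) = i].
  move=> j Hj; rewrite /y /b.
  have [[a1 a2]|[[a1 a2]|[a1 [a2 a3]]]] := cl j Hj.
  + have -> : M < x j = false by lia. rewrite a1 /= muln0 addn0; split => //; have := Hx j Hj; lia.
  + lia.
  + have -> : (x j <= M) = false by lia.
    have -> : M < x j by lia.
    split => //; lia.
have sx : \sum_(j < c.-1) x j = \sum_(j < c.-1) y j + d * \sum_(j < c.-1) b j.
  rewrite big_distrr -big_split /=; apply: eq_bigr => j _.
  have := ltn_ord j; have := ki3; rewrite -/c => ? ?; by case: (cl2 j ltac:(lia)).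
have yb : forall j, j < c.-1 -> 1 <= y j <= M.
  move=> j Hj; have [_ h _] := cl2 j ltac:(rewrite /c; lia); exact: h.
have ylo := sum_le (fun _ => 1) y _ (fun j Hj => ltac:(have := yb j Hj; lia)).
have yhi := sum_le y (fun _ => M) _ (fun j Hj => ltac:(have := yb j Hj; lia)).
rewrite !sum_nat_const !card_ord in ylo yhi.
have [et yt ct] := cl2 c.-1 ltac:(rewrite /c; lia).
have cK : c <= K by apply: Hle.
move: Hs; rewrite sx et.
set Y := \sum_(j < c.-1) y j; set U := \sum_(j < c.-1) b j.
move=> Hs.
have HY : Y = y c.-1.
  move: Hs; rewrite /b /=; case: (M < x c.-1) => /=; case: U => [|[|u]]; nia.
apply: (Hm i im); exists y; split; last by [].
by move=> j Hj; case: (cl2 j Hj).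
Qed.

Lemma base2 k : 3 <= k 0 -> k 0 <= k 1 ->
  good k 2 (k 0 * k 1 - k 1 - 2)
    (fun n => if n <= k 0 - 2 then 0 else if n < (k 1 - 1) * (k 0 - 1) then 1 else 0).
Proof.
move=> s3 st; set s := k 0 in s3 st *; set t := k 1 in st *.
have Lbig : s.-1 * (s - 2) < (t - 1) * (s - 1).
  have: s.-1 = s - 1 by lia. move=> ->. rewrite [X in X < _]mulnC ltn_mul2r; lia.
have eL : (t - 1) * (s - 1) = s * t - s - t + 1.
  have h3 : 3 * t <= s * t by rewrite leq_mul2r; lia.
  rewrite mulnBl mulnBr !muln1 mul1n [t * s]mulnC. lia.
have Lge : 2 * (s - 1) <= (t - 1) * (s - 1) by rewrite leq_mul2r; lia.
have tL : t.-1 * (s - 1) = (t - 1) * (s - 1) by rewrite -subn1.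
set L := (t - 1) * (s - 1) in Lbig eL Lge tL *.
set P := s * t in eL *.
clearbody L P.
split; first by move=> n _; case: ifP => //; case: ifP.
move=> i; case: i => [|[|//]] _ [x [Hx Hs]].
- rewrite -/s in Hx Hs.
  set b := fun j => nat_of_bool (L <= x j).
  have [L1 eL1] : exists L1, L = L1.+1 by exists L.-1; lia.
  have lo : forall j, j < s.-1 -> 1 + L1 * b j <= x j.
    move=> j Hj; have [h1 h2] := Hx j ltac:(lia); move: h2; rewrite /b.
    case: ifP => a1.
      move=> _; have -> : (L <= x j) = false by lia. rewrite /= muln0; lia.
    case: ifP => a2 // _. have -> : L <= x j by lia. rewrite /= muln1; lia.
  have hi : forall j, j < s.-1 -> x j <= (s - 2) + P * b j.
    move=> j Hj; have [h1 h2] := Hx j ltac:(lia); move: h2; rewrite /b.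
    case: ifP => a1; first by lia.
    case: ifP => a2 // _. have -> : L <= x j by lia. rewrite /= muln1; lia.
  have slo := sum_le _ _ _ lo; have shi := sum_le _ _ _ hi.
  rewrite !sum_affine Hs in slo shi.
  have [h1 h2] := Hx s.-1 ltac:(lia); move: h2.
  set U := \sum_(j < s.-1) b j in slo shi.
  clearbody U.
  case: ifP => a1; first by move=> _; lia.
  case: ifP => a2 // _.
  case: U slo shi => [|u] slo shi.
    rewrite !muln0 in slo shi; lia.
  have := leq_pmulr L1 (ltn0Sn u); lia.
- rewrite -/t in Hx Hs.
  have lo : forall j, j < t.-1 -> s - 1 <= x j.
    move=> j Hj; have [h1 h2] := Hx j ltac:(lia); move: h2.
    case: ifP => a1 //; lia.
  have slo := sum_le (fun _ => s - 1) _ _ lo.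
  rewrite sum_nat_const card_ord Hs tL in slo.
  have [h1 h2] := Hx t.-1 ltac:(lia); move: h2.
  case: ifP => a1 //; case: ifP => a2 //; lia.
Qed.

From Stdlib Require Import Classical.

Lemma base1 k N2 : is_schur_number 2 k N2 -> 0 < k 0 -> 0 < k 1 ->
  exists col, good k 2 N2.-1 col.
Proof.
move=> [N0 [HS Hmin]] k0 k1.
case: N2 N0 HS Hmin => [|[|n]] N0 HS Hmin //.
  exists (fun _ => 0); split; first by move=> n; lia.
  move=> i Hi [x [Hx _]].
  have := Hx 0 ltac:(case: (i) Hi => [|[|]] //); lia.
apply: NNPP => H; apply: (Hmin n.+1 ltac:(lia)) => col Hc.
apply: NNPP => H2; apply: H; exists col; split => // i Hi Hm.
by apply: H2; exists i.
Qed.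

Lemma iter k r M0 col0 : good k 2 M0 col0 -> (forall i, i < r -> 3 <= k i) ->
  (forall i j, i <= j -> j < r -> k i <= k j) -> forall m, 2 <= m <= r ->
  exists M col, good k m M col /\
    M.+1 + \sum_(2 <= i < m) \prod_(i.+1 <= j < m) k j = (\prod_(2 <= j < m) k j) * M0.+1.
Proof.
move=> G0 H3 Hmon; elim => [|m IH] hm; first by lia.
case: (ltngtP m 1) => hm1.
- lia.
- have [M [col [G E]]] := IH ltac:(lia).
  have := @ext k m M col G (fun i hi => H3 i ltac:(lia)) (fun i hi => Hmon i m ltac:(lia) ltac:(lia)).
  set col' := (fun n => _) => G'.
  exists (k m * M.+1 - 2), col'; split => //.
  have k3 : 3 <= k m by apply: H3; lia.
  have km : 3 <= k m * M.+1 by rewrite -[3]muln1 leq_mul.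
  rewrite big_nat_recr /=; last by lia.
  rewrite [X in _ + (_ + X)]big_geq // addn1.
  rewrite [\prod_(2 <= j < m.+1) _]big_nat_recr /=; last by lia.
  rewrite (eq_big_nat _ _ (F2 := fun i => (\prod_(i.+1 <= j < m) k j) * k m)); last first.
    move=> i hi; rewrite big_nat_recr //=; lia.
  rewrite -big_distrl /= -mulnA [k m * M0.+1]mulnC mulnA -E mulnDl [M.+1 * k m]mulnC; lia.
- subst m; exists M0, col0; split => //.
  by rewrite !big_geq.
Qed.

Lemma mon_all (k : nat -> nat) r : (forall i, (i.+1 < r)%N -> (k i <= k i.+1)%N) ->
  forall i j, i <= j -> j < r -> k i <= k j.
Proof.
move=> H i; elim => [|j IH] hij hj; first by have -> : i = 0 by lia.
case: (ltngtP i j.+1) => h; last by rewrite h.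
- exact: leq_trans (IH ltac:(lia) ltac:(lia)) (H j hj).
- lia.
Qed.

Local Open Scope ring_scope.

Theorem corollary1 (r : nat) (k : nat -> nat) :
  (3 <= r)%N -> (3 <= k 0%N)%N -> (forall i, (i.+1 < r)%N -> (k i <= k i.+1)%N) ->
  (forall N N2 : nat, is_schur_number r k N -> is_schur_number 2 k N2 ->
     (N%:Z >= (\prod_(2 <= j < r) k j)%N%:Z * N2%:Z
              - (\sum_(2 <= i < r) \prod_(i.+1 <= j < r) k j)%N%:Z))
  /\
  ((4 <= k 0%N)%N -> forall N : nat, is_schur_number r k N ->
     (N%:Z >= (\prod_(2 <= j < r) k j)%N%:Z
                * ((k 0%N)%:Z * (k 1%N)%:Z - (k 1%N)%:Z - 1)
              - (\sum_(2 <= i < r) \prod_(i.+1 <= j < r) k j)%N%:Z)).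
Proof.
move=> r3 k03 Hmon1.
have Hmon := @mon_all k r Hmon1.
have H3 : forall i, (i < r)%N -> (3 <= k i)%N.
  by move=> i hi; apply: leq_trans k03 (Hmon 0%N i _ hi).
have k01 : (k 0 <= k 1)%N by apply: Hmon; lia.
split.
- move=> N N2 HN HN2.
  have N2p : (0 < N2)%N by case: HN2.
  have [col0 G0] := @base1 k N2 HN2 ltac:(lia) ltac:(lia).
  have [M [col [G E]]] := @iter k r _ _ G0 H3 Hmon r ltac:(lia).
  have MN := @good_bound k r _ _ N G HN.
  rewrite prednK // in E.
  move: E MN.
  set P := (\prod_(2 <= j < r) k j)%N; set S := (\sum_(2 <= i < r) _)%N.
  clearbody P S. lia.
- move=> k04 N HN.
  have [M [col [G E]]] := @iter k r _ _ (@base2 k k03 k01) H3 Hmon r ltac:(lia).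
  have MN := @good_bound k r _ _ N G HN.
  have kk : (4 * k 1 <= k 0 * k 1)%N by rewrite leq_mul2r; lia.
  have k13 : (3 <= k 1)%N by lia.
  move: E MN kk k13.
  set P := (\prod_(2 <= j < r) k j)%N; set S := (\sum_(2 <= i < r) _)%N.
  set a := k 0; set b := k 1; set c := (a * b)%N.
  clearbody P S. 
  have -> : (a%:Z * b%:Z) = c%:Z by rewrite /c PoszM.
  clearbody c.
  move=> E MN kk k13.
  clearbody a b.
  have e1 : ((c - b - 2).+1 = c - b - 1)%N by lia.
  rewrite e1 in E.
  lia.
Qed.
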